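(* Let $R$ be a ring and $n$ a positive integer. If every proper ideal of $R$ is weakly $n$-absorbing, then $\mathrm{Jac}(R)^{n+1}=0$, and so $\mathrm{Jac}(R)=\mathrm{Nil}(R)$.
   Context: All rings are commutative with $1\neq0$. A proper ideal $I$ of $R$ is weakly $n$-absorbing if whenever $0\neq a_1\cdots a_{n+1}\in I$ with $a_1,\dots,a_{n+1}\in R$, there are $n$ of the $a_i$'s whose product is in $I$. $\mathrm{Jac}(R)$ is the Jacobson radical (intersection of all maximal ideals) and $\mathrm{Nil}(R)$ the ideal of nilpotent elements. *)

(* Defs.v *)
From HB Require Import structures.
From mathcomp Require Import all_boot all_order all_algebra.
Set Implicit Arguments. Unset Strict Implicit. Unset Printing Implicit Defensive.
Import GRing.Theory.
Local Open Scope ring_scope.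

Definition is_ideal (R : comNzRingType) (I : R -> Prop) : Prop :=
  [/\ I 0, (forall x y, I x -> I y -> I (x + y)) & (forall r x, I x -> I (r * x))].

Definition proper_idl (R : comNzRingType) (I : R -> Prop) : Prop :=
  is_ideal I /\ ~ I 1.

Definition maximal_idl (R : comNzRingType) (M : R -> Prop) : Prop :=
  proper_idl M /\
  (forall J : R -> Prop, proper_idl J -> (forall x, M x -> J x) ->
     forall x, J x -> M x).

Definition Jacrad (R : comNzRingType) : R -> Prop :=
  fun x => forall M : R -> Prop, maximal_idl M -> M x.

Definition Nilrad (R : comNzRingType) : R -> Prop :=
  fun x => exists m : nat, x ^+ m = 0.

Definition ideal_pow (R : comNzRingType) (I : R -> Prop) (k : nat) : R -> Prop :=
  fun x => exists s : seq (k.-tuple R),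
    (forall t, t \in s -> forall a, a \in t -> I a) /\
    x = \sum_(t <- s) \prod_(a <- t) a.

Definition weakly_n_absorbing (R : comNzRingType) (n : nat) (I : R -> Prop) : Prop :=
  proper_idl I /\
  forall a : 'I_n.+1 -> R,
    \prod_(i < n.+1) a i != 0 -> I (\prod_(i < n.+1) a i) ->
    exists j : 'I_n.+1, I (\prod_(i < n.+1 | i != j) a i).

(* Main.v *)
Require Import Defs.
From mathcomp Require Import all_boot all_order all_algebra.
From mathcomp Require Import boolp classical_sets.
Set Implicit Arguments. Unset Strict Implicit. Unset Printing Implicit Defensive.
Import GRing.Theory.
Local Open Scope ring_scope.

Section Aux.
Variable R : comNzRingType.

Lemma idl_opp (I : R -> Prop) : is_ideal I -> forall x, I x -> I (- x).
Proof. by case=> _ _ hm x hx; rewrite -mulN1r; apply: hm. Qed.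

Lemma idl_mulr (I : R -> Prop) : is_ideal I -> forall x r, I x -> I (x * r).
Proof. by case=> _ _ hm x r hx; rewrite mulrC; apply: hm. Qed.

Lemma krull (K : R -> Prop) : proper_idl K ->
  exists M, maximal_idl M /\ (forall x, K x -> M x).
Proof.
move=> [[K0 Kadd Kmul] K1].
pose P := fun X : set R => X = set0 \/ (proper_idl X /\ (forall x, K x -> X x)).
have [A [PA Amax]] : exists A, P A /\ forall B, (A `<` B)%classic -> ~ P B.
  apply: Zorn_bigcup => F FP Ftot.
  case: (pselect (exists X, F X /\ X <> set0)) => [[X0 [FX0 X0n]]|allz]; last first.
    left; apply/seteqP; split => // x [X FX Xx]; apply: allz; exists X; split => //.
    by by move=> X0; move: X0 Xx => ->.
  have FPr : forall X, F X -> X <> set0 -> proper_idl X /\ (forall x, K x -> X x).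
    by move=> X FX Xn; case: (FP X FX).
  right; split; last first.
    by move=> x Kx; exists X0 => //; case: (FPr _ FX0 X0n) => _; apply.
  split; last first.
    move=> [X FX X1]; have Xn : X <> set0 by move=> e; move: e X1 => ->.
    by case: (FPr _ FX Xn) => -[_ hX1] _; apply: hX1.
  have nz : forall (X : set R) (x : R), X x -> X <> set0 by move=> X x Xx e; move: e Xx => ->.
  split.
  - exists X0 => //; case: (FPr _ FX0 X0n) => -[[]] //.
  - move=> x y [X FX Xx] [Y FY Yy].
    case: (Ftot X Y FX FY) => sub.
    + exists Y => //; case: (FPr _ FY (nz _ _ Yy)) => -[[_ ad _] _] _.
      by apply: ad => //; apply: sub.
    + exists X => //; case: (FPr _ FX (nz _ _ Xx)) => -[[_ ad _] _] _.
      by apply: ad => //; apply: sub.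
  - move=> r x [X FX Xx]; exists X => //.
    by case: (FPr _ FX (nz _ _ Xx)) => -[[_ _ mu] _] _; apply: mu.
have PK : P K by right; split => //; split.
case: PA => [A0|[Apr AK]].
  exfalso; apply: (Amax K) => //; rewrite A0; split => // sub.
  by have := sub 0 K0.
exists A; split => //; split => // J Jpr AJ x Jx.
apply: contrapT => nAx.
apply: (Amax J); first by split => // sub; apply: nAx; apply: sub.
by right; split => // y Ky; apply: AJ; apply: AK.
Qed.

Lemma max_prime (M : R -> Prop) : maximal_idl M ->
  forall a b, M (a * b) -> ~ M a -> M b.
Proof.
move=> [[[M0 Madd Mmul] M1] Mmax] a b Mab nMa.
pose J := fun y => exists m r, M m /\ y = m + a * r.
have Jid : is_ideal J.
  split.
  - by exists 0, 0; rewrite mulr0 addr0.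
  - move=> x y [m [r [Mm ->]]] [m' [r' [Mm' ->]]].
    exists (m + m'), (r + r'); split; first by apply: Madd.
    by rewrite mulrDr addrACA.
  - move=> s x [m [r [Mm ->]]]; exists (s * m), (s * r); split; first by apply: Mmul.
    by rewrite mulrDr mulrCA.
have J1 : J 1.
  apply: contrapT => nJ1.
  apply: nMa; apply: (Mmax J) => //.
  - by move=> x Mx; exists x, 0; rewrite mulr0 addr0.
  - by exists 0, 1; rewrite mulr1 add0r.
case: J1 => m [r [Mm e]].
have -> : b = b * m + (a * b) * r by rewrite [a * b]mulrC -mulrA -mulrDr -e mulr1.
apply: Madd; first by apply: Mmul.
by rewrite mulrC; apply: Mmul.
Qed.

Lemma jac_ideal : is_ideal (@Jacrad R).
Proof.
split.
- by move=> M [[[]]].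
- by move=> x y hx hy M hM; case: (hM) => [[[_ ad _] _] _]; apply: ad; [apply: hx|apply: hy].
- by move=> r x hx M hM; case: (hM) => [[[_ _ mu] _] _]; apply: mu; apply: hx.
Qed.

Lemma zero_proper : proper_idl (fun x : R => x = 0).
Proof.
split; last by move/eqP; rewrite oner_eq0.
split => //; first by move=> x y -> ->; rewrite addr0.
by move=> r x ->; rewrite mulr0.
Qed.

Lemma jac_nonunit (x s : R) : Jacrad x -> x * s <> 1.
Proof.
move=> hx e; have [M [hM _]] := krull zero_proper.
case: (hM) => [[Mi M1] _]; apply: M1; rewrite -e.
by apply: idl_mulr => //; apply: hx.
Qed.

Lemma jac_unit (x r : R) : Jacrad x -> exists u, (1 - x * r) * u = 1.
Proof.
move=> hx.
pose K := fun y => exists s, y = (1 - x * r) * s.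
apply: contrapT => nu.
have Kpr : proper_idl K.
  split; last by move=> [s e]; apply: nu; exists s.
  split.
  - by exists 0; rewrite mulr0.
  - by move=> a b [s ->] [t ->]; exists (s + t); rewrite mulrDr.
  - by move=> c a [s ->]; exists (c * s); rewrite mulrCA.
have [M [hM KM]] := krull Kpr.
case: (hM) => [[Mi M1] _]; apply: M1.
have -> : (1 : R) = (1 - x * r) + x * r by rewrite subrK.
case: (Mi) => _ ad _; apply: ad.
  by apply: KM; exists 1; rewrite mulr1.
by apply: idl_mulr => //; apply: hx.
Qed.

End Aux.

Theorem mainTheorem8 (R : comNzRingType) (n : nat) (hn : (0 < n)%N)
  (H : forall I : R -> Prop, proper_idl I -> @weakly_n_absorbing R n I) :
  (forall x : R, ideal_pow (@Jacrad R) n.+1 x <-> x = 0) /\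
  (forall x : R, @Jacrad R x <-> @Nilrad R x).
Proof.
have Jid := @jac_ideal R.
have prod0 : forall a : 'I_n.+1 -> R, (forall i, Jacrad (a i)) ->
    \prod_(i < n.+1) a i = 0.
  move=> a ha.
  have [//|pn0] := eqVneq (\prod_(i < n.+1) a i) 0.
  set p := \prod_(i < n.+1) a i in pn0 *.
  have pJ : Jacrad p.
    rewrite /p (bigD1 ord0) //=; exact: (idl_mulr Jid _ (ha ord0)).
  pose I := fun y => exists s, y = p * s.
  have Ipr : proper_idl I.
    split; last by move=> [s e]; apply: (@jac_nonunit R p s pJ); rewrite -e.
    split.
    - by exists 0; rewrite mulr0.
    - by move=> u v [s ->] [t ->]; exists (s + t); rewrite mulrDr.
    - by move=> c u [s ->]; exists (c * s); rewrite mulrCA.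
  have [_ wk] := H I Ipr.
  have [j [s hj]] := wk a pn0 (ex_intro _ 1 (esym (mulr1 _))).
  set q := \prod_(i < n.+1 | i != j) a i in hj.
  have pq : p = a j * q by rewrite /p (bigD1 j).
  have [u hu] := jac_unit s (ha j).
  have q0 : q = 0.
    have : q * (1 - a j * s) = 0.
      by rewrite mulrBr mulr1 mulrCA mulrA -pq -hj subrr.
    by move=> e; rewrite -[q]mulr1 -hu mulrA e mul0r.
  by move: pn0; rewrite pq q0 mulr0 eqxx.
split.
  move=> x; split; last first.
    by move=> ->; exists [::]; split => //; rewrite big_nil.
  move=> [s [hs ->]]; rewrite big1_seq // => t /andP [_ ts].
  rewrite big_tuple; apply: prod0 => i; apply: (hs t ts); exact: mem_tnth.
move=> x; split.
  move=> hx; exists n.+1.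
  have := prod0 (fun _ => x) (fun _ => hx).
  by rewrite prodr_const card_ord.
move=> [m hm] M hM.
case: (hM) => [[[M0 _ _] M1] _].
suff aux : forall k, M (x ^+ k) -> M x by apply: (aux m); rewrite hm.
elim=> [|k IH] hk; first by exfalso; apply: M1; rewrite -(expr0 x).
case: (pselect (M x)) => // nMx.
by apply: IH; apply: (max_prime hM _ nMx); rewrite -exprS.
Qed.
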